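(* Let $p$ be an odd prime, $G = \mathrm{PGL}(2,p^2)$, and let $D$ be a subgroup of $G$ that is dihedral of order $2p$. Then the normalizer $N_G(D)$ is isomorphic to $C_p \rtimes C_{p-1}$.
   Context: $C_n$ denotes the cyclic group of order $n$. *)

(* Defs.v *)
From HB Require Import structures.
From mathcomp Require Import all_boot all_order all_algebra all_fingroup all_solvable all_field.
Set Implicit Arguments. Unset Strict Implicit. Unset Printing Implicit Defensive.

Definition GLscalars (F : finFieldType) : {set {'GL_2[F]}} :=
  [set g : {'GL_2[F]} | is_scalar_mx (GLval g)].

Definition PGL2 (F : finFieldType) : {set coset_of (GLscalars F)} :=
  ('GL_2[F] / GLscalars F)%g.

(* Main.v *)
Require Import Defs.
From HB Require Import structures.
From mathcomp Require Import all_boot all_order all_algebra all_fingroup all_solvable all_field.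
From mathcomp Require Import ring.
Module Part1.
Set Implicit Arguments. Unset Strict Implicit. Unset Printing Implicit Defensive.
Import GRing.Theory.
Local Open Scope ring_scope.

Section M2.
Variable F : fieldType.

Definition mk2 (a b c d : F) : 'M[F]_2 :=
  \matrix_(i < 2, j < 2) if (i == 0 :> nat) then (if (j == 0 :> nat) then a else b)
                         else (if (j == 0 :> nat) then c else d).

Lemma mk2E (M : 'M[F]_2) : M = mk2 (M 0 0) (M 0 1) (M 1 0) (M 1 1).
Proof.
apply/matrixP => i j; rewrite !mxE.
by case: i => [[|[|//]]] ?; case: j => [[|[|//]]] ? /=; congr (M _ _); apply: val_inj.
Qed.

Lemma mk2_inj a b c d a' b' c' d' :
  mk2 a b c d = mk2 a' b' c' d' -> [/\ a = a', b = b', c = c' & d = d'].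
Proof.
move=> /matrixP E.
by have := E 0 0; have := E 0 1; have := E 1 0; have := E 1 1; rewrite !mxE /=.
Qed.

Lemma mk2_mul a b c d a' b' c' d' :
  mk2 a b c d * mk2 a' b' c' d' =
  mk2 (a*a' + b*c') (a*b' + b*d') (c*a'+d*c') (c*b' + d*d').
Proof.
apply/matrixP => i j; rewrite !mxE !big_ord_recl big_ord0 !mxE /=.
by case: i => [[|[|//]]] ?; case: j => [[|[|//]]] ? /=; rewrite addr0.
Qed.

Lemma mk2_scalar x : x%:M = mk2 x 0 0 x.
Proof.
apply/matrixP => i j; rewrite !mxE.
by case: i => [[|[|//]]] ?; case: j => [[|[|//]]] ? /=.
Qed.

Lemma mk2_1 : 1 = mk2 1 0 0 1.
Proof. by rewrite -mk2_scalar. Qed.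

Lemma mk2_add a b c d a' b' c' d' :
  mk2 a b c d + mk2 a' b' c' d' = mk2 (a+a') (b+b') (c+c') (d+d').
Proof.
apply/matrixP => i j; rewrite !mxE.
by case: i => [[|[|//]]] ?; case: j => [[|[|//]]] ? /=.
Qed.

Lemma mk2_opp a b c d : - mk2 a b c d = mk2 (-a) (-b) (-c) (-d).
Proof.
apply/matrixP => i j; rewrite !mxE.
by case: i => [[|[|//]]] ?; case: j => [[|[|//]]] ? /=.
Qed.

Lemma mk2_scale x a b c d : x *: mk2 a b c d = mk2 (x*a) (x*b) (x*c) (x*d).
Proof.
apply/matrixP => i j; rewrite !mxE.
by case: i => [[|[|//]]] ?; case: j => [[|[|//]]] ? /=.
Qed.

Lemma det_mk2 a b c d : \det (mk2 a b c d) = a * d - b * c.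
Proof.
rewrite (expand_det_row _ 0) !big_ord_recl big_ord0 /cofactor.
rewrite !det_mx11 !mxE /= /bump /= expr0 expr1; ring.
Qed.
End M2.

Section GLsetup.
Variable F : finFieldType.
Local Open Scope group_scope.

Lemma GLvalM (g h : {'GL_2[F]}) : GLval (g * h) = (GLval g * GLval h)%R.
Proof. by []. Qed.
Lemma GLvalV (g : {'GL_2[F]}) : GLval (g^-1) = ((GLval g)^-1)%R.
Proof. by []. Qed.
Lemma GLval1 : GLval (1 : {'GL_2[F]}) = 1%R.
Proof. by []. Qed.
Lemma GLvalX (g : {'GL_2[F]}) n : GLval (g ^+ n) = ((GLval g) ^+ n)%R.
Proof.
elim: n => [|n IH]; first by rewrite expg0 expr0.
by rewrite expgS GLvalM IH exprS.
Qed.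
Lemma GLvalJ (g h : {'GL_2[F]}) : GLval (g ^ h) = ((GLval h)^-1 * GLval g * GLval h)%R.
Proof. by rewrite conjgE mulgA. Qed.

Definition mkGL (A : 'M[F]_2) : {'GL_2[F]} := insubd (1 : {'GL_2[F]}) A.
Lemma mkGLE (A : 'M[F]_2) : (\det A != 0)%R -> GLval (mkGL A) = A.
Proof.
move=> dA; rewrite /mkGL val_insubd.
have -> : (A \is a GRing.unit) by rewrite unitmxE unitfE.
by [].
Qed.

Lemma GLdet (g : {'GL_2[F]}) : (\det (GLval g) != 0)%R.
Proof. exact: GL_det. Qed.

Lemma Sc_group : group_set (GLscalars F).
Proof.
apply/group_setP; split; first by rewrite inE; apply/is_scalar_mxP; exists 1%R.
move=> x y; rewrite !inE => /is_scalar_mxP[a ea] /is_scalar_mxP[b eb].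
by apply/is_scalar_mxP; exists (a * b)%R; rewrite GLvalM ea eb scalar_mxM.
Qed.
Canonical ScG := Group Sc_group.

Lemma inSc (g : {'GL_2[F]}) : (g \in ScG) = is_scalar_mx (GLval g).
Proof. by rewrite inE. Qed.

Lemma normSc (x : {'GL_2[F]}) : x \in 'N(ScG).
Proof.
rewrite inE; apply/subsetP => _ /imsetP[z Hz ->].
move: Hz; rewrite !inSc GLvalJ => /is_scalar_mxP[c ec]; rewrite ec.
apply/is_scalar_mxP; exists c.
rewrite -mulrA. have -> : (c%:M * GLval x = GLval x * c%:M)%R by exact: (esym (scalar_mxC _ _)).
by rewrite mulKr // GL_unit.
Qed.

Local Notation pi := (coset ScG).

Lemma pieqP (A B : {'GL_2[F]}) :
  pi A = pi B <-> exists c, GLval A = (c%:M * GLval B)%R.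
Proof.
split.
  move/(rcoset_kercosetP (normSc A) (normSc B))/rcosetP => [h Hh ->].
  by move: Hh; rewrite inSc => /is_scalar_mxP[c ec]; exists c; rewrite GLvalM ec.
move=> [c ec]; apply/(rcoset_kercosetP (normSc A) (normSc B))/rcosetP.
exists (A * B^-1); last by rewrite mulgKV.
rewrite inSc GLvalM GLvalV ec -mulrA mulrV ?GL_unit // mulr1.
by apply/is_scalar_mxP; exists c.
Qed.

Lemma pi1eqP (A : {'GL_2[F]}) : pi A = 1 <-> exists c, GLval A = c%:M.
Proof.
rewrite -(morph1 pi) pieqP GLval1; split => -[c ec]; exists c; by rewrite ec ?mulr1.
Qed.

Lemma cosM (A B : {'GL_2[F]}) : pi (A * B) = pi A * pi B.
Proof. by rewrite morphM ?normSc. Qed.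
Lemma cosV (A : {'GL_2[F]}) : pi (A^-1) = (pi A)^-1.
Proof. by rewrite morphV ?normSc. Qed.
Lemma cosX (A : {'GL_2[F]}) n : pi (A ^+ n) = (pi A) ^+ n.
Proof. by rewrite morphX ?normSc. Qed.
Lemma cosJ (A B : {'GL_2[F]}) : pi (A ^ B) = (pi A) ^ (pi B).
Proof. by rewrite morphJ ?normSc. Qed.
Lemma cos_repr (g : coset_of ScG) : pi (repr g) = g.
Proof. exact: coset_reprK. Qed.

Lemma PGL2T : PGL2 F = setT.
Proof. exact: (quotientT ScG). Qed.

End GLsetup.

End Part1.
Import Part1.

Module Part2.
Set Implicit Arguments. Unset Strict Implicit. Unset Printing Implicit Defensive.
Import GRing.Theory.

Section Core.
Variable F : finFieldType.
Local Open Scope group_scope.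
Local Open Scope ring_scope.
Local Notation pi := (coset (ScG F)).

Definition Umx : 'M[F]_2 := mk2 1 1 0 1.
Lemma det_Umx : (\det Umx != 0)%R.
Proof. by rewrite det_mk2 mulr1 mulr0 subr0 oner_neq0. Qed.
Definition U := mkGL Umx.
Lemma UE : GLval U = Umx.
Proof. exact: mkGLE det_Umx. Qed.
Lemma UXE n : GLval (U ^+ n)%g = mk2 1 n%:R 0 1.
Proof.
rewrite GLvalX UE; elim: n => [|n IH]; first by rewrite expr0 mk2_1.
rewrite exprS IH /Umx mk2_mul; congr mk2; rewrite ?mulrS; ring.
Qed.

Lemma conj_eqGL (X Y G : {'GL_2[F]}) :
  (GLval X * GLval G = GLval G * GLval Y)%R -> (X ^ G)%g = Y.
Proof.
move=> E; apply: val_inj; change (GLval (X ^ G)%g = GLval Y); rewrite GLvalJ -mulrA E mulKr //; exact: GL_unit.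
Qed.

Lemma conj_piE (X Y G : {'GL_2[F]}) : pi (X ^ G)%g = pi Y ->
  exists c, (GLval X * GLval G = c%:M * (GLval G * GLval Y))%R.
Proof.
move/pieqP=> [c]; rewrite GLvalJ => E; exists c.
have := congr1 (fun M => GLval G * M)%R E; rewrite !mulrA mulrV ?GL_unit // mul1r => ->.
by congr (_ * _)%R; exact: scalar_mxC.
Qed.

Lemma UVE : GLval (U^-1)%g = mk2 1 (-1) 0 1.
Proof.
rewrite GLvalV UE.
have uU : Umx \is a GRing.unit by have := GL_unit U; rewrite UE.
have E : (Umx * mk2 1 (-1) 0 1 = 1)%R.
  rewrite /Umx mk2_mul mk2_1; congr mk2; ring.
by rewrite -[RHS](mulKr uU) E mulr1.
Qed.

Lemma mx_scalar_mul (c : F) a b z d : (c%:M * mk2 a b z d = mk2 (c * a) (c * b) (c * z) (c * d))%R.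
Proof. by rewrite mk2_scalar mk2_mul; congr mk2; ring. Qed.

Lemma T_form (T : {'GL_2[F]}) : pi (U ^ T)%g = pi (U^-1)%g ->
  (2%:R : F)%R != 0%R -> exists a b, (a != 0)%R /\ GLval T = mk2 a b 0 (-a)%R.
Proof.
move=> /conj_piE [c]; rewrite UE UVE => E h2.
have dT := GLdet T; move: E dT; rewrite [GLval T]mk2E.
set a := GLval T 0 0; set b := GLval T 0 1; set z := GLval T 1 0; set d := GLval T 1 1.
rewrite /Umx !mk2_mul mx_scalar_mul det_mk2 => /mk2_inj [e1 e2 e3 e4] dT.
rewrite !mul1r !mul0r !mulr1 !mulr0 !addr0 !add0r in e1 e2 e3 e4.
have e3' : (c - 1) * z = 0 by rewrite mulrBl mul1r -e3 subrr.
have z0 : z = 0.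
  move/eqP: e3'; rewrite mulf_eq0 => /orP[|/eqP //].
  rewrite subr_eq0 => /eqP c1; move: e1; rewrite c1 mul1r => /eqP.
  by rewrite -subr_eq0 addrC addKr => /eqP.
move: dT e1 e2 e4; rewrite z0 !mulr0 subr0 => dT e1 e2 e4.
have a0 : a != 0 by apply: contraNneq dT => ->; rewrite mul0r.
have c1 : c = 1.
  have : (c - 1) * a = 0 by rewrite mulrBl mul1r -e1 addr0 subrr.
  by move/eqP; rewrite mulf_eq0 (negPf a0) orbF subr_eq0 => /eqP.
exists a, b; split => //; congr mk2.
move: e2; rewrite c1 mul1r => /eqP; rewrite addrC -subr_eq0 => /eqP e2.
apply/eqP; rewrite -subr_eq0; apply/eqP; rewrite -e2; ring.
Qed.

Section Fix.
Variables (T : {'GL_2[F]}) (a b : F).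
Hypotheses (ha : a != 0) (hT : GLval T = mk2 a b 0 (-a)).

Definition Gmx (k : nat) : 'M[F]_2 :=
  mk2 1 (b * (1 - k%:R) / (2%:R * a)) 0 k%:R.
Definition Gk k := mkGL (Gmx k).

Lemma GkE k : k%:R != 0 :> F -> GLval (Gk k) = Gmx k.
Proof. by move=> hk; apply: mkGLE; rewrite det_mk2 mul1r mulr0 subr0. Qed.

Lemma Gk_U k : k%:R != 0 :> F -> (U ^ Gk k)%g = (U ^+ k)%g.
Proof.
move=> hk; apply: conj_eqGL; rewrite UE UXE GkE // /Umx /Gmx !mk2_mul.
congr mk2; ring.
Qed.

Lemma Gk_T k : k%:R != 0 :> F -> (2%:R : F) != 0 -> (T ^ Gk k)%g = T.
Proof.
move=> hk h2; apply: conj_eqGL; rewrite hT GkE // /Gmx !mk2_mul.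
congr mk2; try ring. by field; rewrite ha h2.
Qed.

Lemma centr_form (G : {'GL_2[F]}) (i h : nat) :
  (h.*2)%:R = -1 :> F ->
  pi (U ^ G)%g = pi U -> pi (T ^ G)%g = pi (U ^+ i * T)%g ->
  pi G = pi (U ^+ (i * h))%g.
Proof.
move=> hh /conj_piE [c E1] /conj_piE [c' E2].
move: E1 E2 (GLdet G); rewrite UE GLvalM UXE hT [GLval G]mk2E.
set x := GLval G 0 0; set y := GLval G 0 1; set z := GLval G 1 0; set w := GLval G 1 1.
rewrite /Umx !mk2_mul !mx_scalar_mul det_mk2 => /mk2_inj [e1 e2 e3 e4] /mk2_inj [f1 f2 f3 f4] dG.
rewrite !mul1r !mul0r !mulr1 !mulr0 !addr0 !add0r in e1 e2 e3 e4.
have e3' : (c - 1) * z = 0 by rewrite mulrBl mul1r -e3 subrr.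
have z0 : z = 0.
  move/eqP: e3'; rewrite mulf_eq0 => /orP[|/eqP //].
  rewrite subr_eq0 => /eqP c1; move: e1; rewrite c1 mul1r => /eqP.
  by rewrite -subr_eq0 addrC addKr => /eqP.
move: dG e1 e2 e4 f1 f2; rewrite z0 !mulr0 !mul0r !addr0 subr0 => dG e1 e2 e4 f1 f2.
have x0 : x != 0 by apply: contraNneq dG => ->; rewrite mul0r.
have c1 : c = 1.
  have : (c - 1) * x = 0 by rewrite mulrBl mul1r -e1 subrr.
  by move/eqP; rewrite mulf_eq0 (negPf x0) orbF subr_eq0 => /eqP.
move: e2; rewrite c1 mul1r => /eqP; rewrite addrC -subr_eq0 => /eqP e2.
have wx : w = x by apply/eqP; rewrite -subr_eq0; apply/eqP; rewrite -e2; ring.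
have c'1 : c' = 1.
  have : (c' - 1) * (a * x) = 0.
    by rewrite mulrBl mul1r {2}f1; ring.
  by move/eqP; rewrite mulf_eq0 (negPf (mulf_neq0 ha x0)) orbF subr_eq0 => /eqP.
apply/pieqP; exists x; rewrite UXE mx_scalar_mul [GLval G]mk2E -/x -/y -/z -/w wx z0 mulr0 mulr1; congr mk2.
move: f2; rewrite c'1 mul1r wx => f2.
have hh' : h%:R * 2%:R = -1 :> F by rewrite -natrM muln2.
have : y * 2%:R * a = - (x * i%:R) * a.
  apply/eqP; rewrite -subr_eq0; apply/eqP. 
  have := f2; move/eqP; rewrite -subr_eq0 => /eqP <-; ring.
move/(mulIf ha) => {}f2.
rewrite natrM.
have -> : y = - (y * (h%:R * 2%:R)) by rewrite hh'; ring.
by rewrite mulrCA f2; ring.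
Qed.
End Fix.
End Core.

End Part2.
Import Part2.

Module Part3.
Set Implicit Arguments. Unset Strict Implicit. Unset Printing Implicit Defensive.
Import GRing.Theory.

Section Core2.
Variable F : finFieldType.
Local Open Scope group_scope.
Local Notation pi := (coset (ScG F)).

Lemma core (p : nat) (D : {group coset_of (ScG F)}) (t : coset_of (ScG F)) :
  prime p -> odd p -> (p \in [pchar F])%R ->
  <[pi (U F)]> * <[t]> = D -> #[pi (U F)] = p -> #[t] = 2 -> pi (U F) ^ t = (pi (U F))^-1 ->
  exists K H : {group coset_of (ScG F)},
    [/\ K ><| H = 'N(D), cyclic K /\ #|K| = p, cyclic H /\ #|H| = p.-1 & 'C_H(K) = 1].
Proof.
move=> pr oddp chp defD orr ot rt.
set r := pi (U F) in defD orr rt *.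
have p_gt1 := prime_gt1 pr.
have np2 : ~~ (p %| 2).
  apply/negP => /(dvdn_leq (isT : 0 < 2)); rewrite leq_eqVlt ltnS => /orP[/eqP p2|].
    by move: oddp; rewrite p2.
  by rewrite leqNgt p_gt1.
have h2F : (2%:R : F)%R != 0%R by rewrite -(dvdn_pcharf chp).
set T := repr t; have tT : t = pi T by rewrite cos_repr.
have [a [b [ha hT]]] : exists a b, (a != 0)%R /\ GLval T = mk2 a b 0 (-a)%R.
  apply: T_form h2F; by rewrite cosJ -tT rt cosV.
set h := p./2.
have hh : ((h.*2)%:R = -1 :> F)%R.
  apply/eqP; rewrite -subr_eq0 opprK -(natrD _ _ 1) addn1.
  have -> : h.*2.+1 = p by rewrite -[in RHS](odd_double_half p) oddp add1n.
  by rewrite -(dvdn_pcharf chp).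
have Dr : r \in D by rewrite -defD -{1}[r]mulg1; apply: mem_mulg; rewrite ?cycle_id ?group1.
have Dt : t \in D by rewrite -defD -{1}[t]mul1g; apply: mem_mulg; rewrite ?cycle_id ?group1.
have t2 : t ^+ 2 = 1 by have := expg_order t; rewrite ot.
have tV : t^-1 = t by apply/eqP; rewrite eq_invg_mul -{2}(expg1 t) -expgS t2.
have Delem d : d \in D -> exists i, d = r ^+ i \/ d = r ^+ i * t.
  rewrite -defD => /mulsgP[u v /cycleP[i ->] vt ->]; exists i.
  move: vt; rewrite cycle2g // !inE => /orP[/eqP->|/eqP->]; [left; exact: mulg1 | by right].
have rt2 i : (r ^+ i * t) ^+ 2 = 1.
  rewrite expgS expg1 -mulgA -{1}tV -[t^-1 * (_ * t)]/(r ^+ i ^ t).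
  by rewrite conjXg rt expgVn mulgV.
have NK : 'N(D) \subset 'N(<[r]>).
  apply/subsetP => g Ng; rewrite inE -cycleJ cycle_subG.
  have Drg : r ^ g \in D by rewrite memJ_norm.
  have [i [->|E]] := Delem _ Drg; first by rewrite mem_cycle.
  move: np2; rewrite -orr -(orderJ r g) E order_dvdn rt2 eqxx. by [].
have F1 g : g \in 'N(D) -> r ^ g = r -> g \in <[r]>.
  move=> Ng rg.
  set G := repr g; have gG : g = pi G by rewrite cos_repr.
  have Dtg : t ^ g \in D by rewrite memJ_norm.
  have [i [E|E]] := Delem _ Dtg.
    have := order_dvdG (mem_cycle r i).
    by rewrite -E orderJ ot -orderE orr dvdn2 oddp.
  have : pi G = pi (U F ^+ (i * h)).
    apply: (centr_form ha hT hh).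
      by rewrite cosJ -gG rg.
    by rewrite cosJ -gG -tT E cosM cosX -tT.
  by rewrite -gG cosX => ->; rewrite mem_cycle.
have F2 k : 0 < k < p -> pi (Gk a b k) \in 'N(D) /\ r ^ pi (Gk a b k) = r ^+ k.
  case/andP => k0 kp.
  have hk : (k%:R != 0 :> F)%R.
    by rewrite -(dvdn_pcharf chp); apply/negP => /(dvdn_leq k0); rewrite leqNgt kp.
  have rg : r ^ pi (Gk a b k) = r ^+ k by rewrite -cosJ Gk_U // cosX.
  have tg : t ^ pi (Gk a b k) = t by rewrite tT -cosJ Gk_T.
  split => //.
  rewrite inE -defD conjsMg -!cycleJ rg tg.
  by apply: mulSg; rewrite cycle_subG mem_cycle.
have KN : <[r]> \subset 'N(D) by rewrite cycle_subG (subsetP (normG D)).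
have kerN : 'N(D) :&: 'C(<[r]>) = <[r]>.
  apply/eqP; rewrite eqEsubset subsetI KN (cycle_abelian r : <[r]> \subset 'C(<[r]>)) andbT andbT.
  apply/subsetP => g /setIP[Ng Cg]; apply: F1 => //.
  move: Cg; rewrite cent_cycle => /cent1P Cg.
  by apply/conjg_fixP/commgP; rewrite /commute Cg.
set imN := conj_aut <[r]> @* 'N(D).
have oK : #|<[r]>| = p by rewrite -orderE.
have idxN : #|'N(D) : <[r]>| = #|imN|.
  by rewrite /imN card_morphim (setIidPr NK) ker_conj_aut -[in RHS]indexgI kerN.
have imle : #|imN| <= p.-1.
  rewrite -(totient_prime pr) -oK -card_Aut_cyclic ?cycle_cyclic //.
  exact/subset_leq_card/Aut_conj_aut.
have imge : p.-1 <= #|imN|.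
  pose f (j : 'I_p.-1) := conj_aut <[r]> (pi (Gk a b j.+1)).
  have Fj (j : 'I_p.-1) : 0 < j.+1 < p.
    by rewrite ltn0Sn /= -ltn_predRL ltn_ord.
  have finj : injective f.
    move=> j1 j2 E; have := congr1 (fun q : {perm coset_of (ScG F)} => q r) E; rewrite /f.
    have [N1 E1] := F2 _ (Fj j1); have [N2 E2] := F2 _ (Fj j2).
    rewrite !norm_conj_autE ?cycle_id ?(subsetP NK) // E1 E2 => /eqP.
    rewrite eq_expg_mod_order orr !modn_small; last 2 first.
      by case/andP: (Fj j2). 
      by case/andP: (Fj j1).
    by move/eqP => [] /val_inj.
  have <- : #|[set f j | j in 'I_p.-1]| = p.-1 by rewrite card_imset // card_ord.
  apply/subset_leq_card/subsetP => _ /imsetP[j _ ->].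
  have [Nj _] := F2 _ (Fj j).
  by rewrite /f mem_morphim ?(subsetP NK).
have idx : #|'N(D) : <[r]>| = p.-1 by rewrite idxN; apply/eqP; rewrite eqn_leq imle imge.
have hallK : Hall 'N(D) <[r]>.
  rewrite /Hall KN idx oK prime_coprime //.
  have pp : 0 < p.-1 by rewrite ltn_predRL.
  by apply/negP => /(dvdn_leq pp); rewrite leqNgt ltn_predL (ltnW p_gt1).
have nsK : <[r]> <| 'N(D) by rewrite /normal KN NK.
have /splitsP [H /complP [tiKH defN]] := SchurZassenhaus_split hallK nsK.
have sHN : H \subset 'N(D) by rewrite -defN mulG_subr.
have sHNK : H \subset 'N(<[r]>) := subset_trans sHN NK.
have CH : 'C_H(<[r]>) = 1.
  apply/trivgP; rewrite -tiKH; apply/subsetP => x /setIP[Hx Cx].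
  have : x \in 'N(D) :&: 'C(<[r]>) by rewrite inE Cx (subsetP sHN).
  by rewrite kerN => Kx; rewrite inE Kx Hx.
exists <[r]>%G, H; split.
- by rewrite sdprodE // defN.
- by rewrite cycle_cyclic oK.
- split; last first.
    apply/eqP; rewrite -(eqn_pmul2l (ltnW p_gt1)) -{1}oK -TI_cardMg // defN.
    by rewrite -(Lagrange KN) oK idx.
  have injf : 'injm (restrm sHNK (conj_aut <[r]>)).
    by rewrite ker_restrm ker_conj_aut CH.
  rewrite -(injm_cyclic injf (subxx H)) morphim_restrm setIid.
  apply: cyclicS (Aut_conj_aut _ _) _.
  by apply: Aut_prime_cyclic; rewrite oK.
- exact: CH.
Qed.
End Core2.
End Part3.
Import Part3.

Module Part4.
Set Implicit Arguments. Unset Strict Implicit. Unset Printing Implicit Defensive.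
Import GRing.Theory.

Section Nil.
Variable F : fieldType.
Local Open Scope ring_scope.

Lemma detXn (B : 'M[F]_2) n : \det (B ^+ n) = \det B ^+ n.
Proof.
elim: n => [|n IH]; first by rewrite !expr0 det1.
by rewrite !exprS detM IH.
Qed.

Lemma nil2 (B : 'M[F]_2) n : B ^+ n = 0 -> B * B = 0.
Proof.
case: n => [|n]; first by rewrite expr0 => /eqP; rewrite oner_eq0.
move=> Bn.
have dB : \det B = 0.
  have : \det B ^+ n.+1 == 0 by rewrite -detXn Bn det0.
  by rewrite expf_eq0 => /andP[_ /eqP].
move: dB Bn; rewrite [B]mk2E.
set x := B 0 0; set y := B 0 1; set z := B 1 0; set w := B 1 1.
rewrite det_mk2 => dB.
have CH : mk2 x y z w * mk2 x y z w = (x + w) *: mk2 x y z w.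
  rewrite mk2_mul mk2_scale; congr mk2; try ring;
  by apply/eqP; rewrite -subr_eq0; apply/eqP;
     transitivity (-(x*w - y*z)); [ring | rewrite dB oppr0].
have pw k : mk2 x y z w ^+ k.+1 = (x + w) ^+ k *: mk2 x y z w.
  elim: k => [|k IH]; first by rewrite expr1 expr0 scale1r.
  by rewrite exprSr IH -scalerAl CH scalerA -exprSr.
rewrite pw => /eqP; rewrite scaler_eq0 => /orP[|/eqP->]; last by rewrite mul0r.
by rewrite expf_eq0 => /andP[_ /eqP tr0]; rewrite CH tr0 scale0r.
Qed.

Lemma nil_conj (B : 'M[F]_2) : B * B = 0 -> B != 0 ->
  exists P : 'M[F]_2, \det P != 0 /\ B * P = P * mk2 0 1 0 0.
Proof.
rewrite [B]mk2E.
set x := B 0 0; set y := B 0 1; set z := B 1 0; set w := B 1 1.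
rewrite mk2_mul => E nB.
have [e1 e2 e3 e4] : [/\ x * x + y * z = 0, x * y + y * w = 0, z * x + w * z = 0
   & z * y + w * w = 0].
  by have := E; rewrite [X in _ = X](mk2E 0) !mxE => /mk2_inj.
have [z0|nz] := eqVneq z 0.
  have x0 : x = 0 by apply/eqP; move: e1; rewrite z0 mulr0 addr0 => /eqP; rewrite mulf_eq0 orbb.
  have w0 : w = 0 by apply/eqP; move: e4; rewrite z0 mul0r add0r => /eqP; rewrite mulf_eq0 orbb.
  have ny : y != 0.
    apply: contraNneq nB => y0; rewrite x0 y0 z0 w0.
    by apply/eqP; apply/matrixP => i j; rewrite !mxE; case: ifP; case: ifP.
  exists (mk2 y 0 0 1); split; first by rewrite det_mk2 mulr1 mulr0 subr0.
  by rewrite !mk2_mul x0 z0 w0; congr mk2; ring.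
exists (mk2 x 1 z 0); split.
  by rewrite det_mk2 mulr0 mul1r sub0r oppr_eq0.
rewrite !mk2_mul; congr mk2; rewrite ?e1 ?e3; ring.
Qed.
End Nil.

Section ConjU.
Variable F : finFieldType.
Local Open Scope ring_scope.
Local Notation pi := (coset (ScG F)).

Lemma conj_to_U (p : nat) (A : {'GL_2[F]}) (lam : F) :
  p \in [pchar F] -> #|F| = (p * p)%N -> GLval (A ^+ p)%g = lam%:M ->
  ~~ is_scalar_mx (GLval A) -> exists P : {'GL_2[F]}, pi (A ^ P)%g = pi (U F).
Proof.
move=> chp cardF; rewrite GLvalX => Mp nsc.
set M := GLval A in Mp nsc *.
have uM : M \is a GRing.unit by exact: GL_unit.
have lam0 : lam != 0.
  apply: contraTneq (unitrX p uM) => l0; rewrite Mp l0 rmorph0 unitr0 //.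
set mu := lam ^+ p.
have mup : mu ^+ p = lam by rewrite /mu -exprM -cardF expf_card.
have mu0 : mu != 0 by rewrite expf_neq0.
have chM : p \in [pchar 'M[F]_2] by rewrite pchar_lalg.
have Bp0 : (M - mu%:M) ^+ p = 0.
  have := pFrobenius_autB_comm chM (scalar_mxC mu M).
  have mup2 : (lam ^+ p) ^+ p = lam by [].
  by rewrite !pFrobenius_autE => ->; rewrite Mp -rmorphXn mup2 subrr.
set Bm := mu^-1 *: (M - mu%:M).
have Bmp : Bm ^+ p = 0 by rewrite exprZn Bp0 scaler0.
have nB : Bm != 0.
  apply: contra nsc; rewrite scaler_eq0 invr_eq0 (negPf mu0) /= subr_eq0 => /eqP->.
  exact: scalar_mx_is_scalar.
have [P0 [dP EP]] := nil_conj (nil2 Bmp) nB.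
exists (mkGL P0); apply/pieqP; exists mu.
rewrite GLvalJ mkGLE // UE.
have uP : P0 \is a GRing.unit by rewrite unitmxE unitfE.
have ME : M = mu%:M + mu *: Bm by rewrite scalerA mulfV // scale1r addrC subrK.
rewrite -mulrA -/M.
have -> : M * P0 = P0 * (mu%:M * Umx F).
  rewrite ME mulrDl -scalerAl EP /Umx mk2_scalar -mk2_scalar.
  have -> : mk2 (1 : F) 1 0 1 = 1 + mk2 0 1 0 0.
    by rewrite mk2_1 mk2_add; congr mk2; ring.
  rewrite mulrDr mulr1 mulrDr scalerAr -mul_scalar_mx; congr (_ + _).
  exact: (esym (scalar_mxC _ _)).
by rewrite mulrA mulVr // mul1r.
Qed.
End ConjU.

End Part4.
Import Part4.

Module Part5.
Set Implicit Arguments. Unset Strict Implicit. Unset Printing Implicit Defensive.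
Import GRing.Theory.
Local Open Scope group_scope.

Lemma dihedral_gens (gT : finGroupType) (G : {group gT}) q :
  1 < q -> G \isog 'D_(2 * q) ->
  exists x y, [/\ <[x]> * <[y]> = G, #[x] = q, #[y] = 2 & x ^ y = x^-1].
Proof.
move=> q_gt1; rewrite mul2n.
case/(isoGrpP _ (Grp_dihedral q_gt1)); rewrite card_dihedral // => oG.
case/existsP=> -[x y] /= /eqP[defG xq y2 xy].
have{} defG: <[x]> * <[y]> = G.
  by rewrite -norm_joinEr // norms_cycle xy groupV cycle_id.
have ox_le : #[x] <= q by rewrite dvdn_leq ?(ltnW q_gt1) // order_dvdn xq.
have notXy: y \notin <[x]>.
  apply/negP => Xy; move: oG; rewrite -defG mulGSid ?cycle_subG // => oX.
  rewrite [#[x]]orderE oX -addnn in ox_le; move: ox_le; rewrite leqNgt. by rewrite -{1}[q]addn0 ltn_add2l (ltnW q_gt1).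
have oy: #[y] = 2 by apply: nt_prime_order (group1_contra notXy).
have ox: #[x] = q.
  apply: double_inj; rewrite -muln2 -oy -oG -defG TI_cardMg //.
  by rewrite setIC prime_TIg ?cycle_subG // -orderE oy.
by exists x, y.
Qed.

Lemma main_aux (p : nat) (F : finFieldType)
    (D : {group coset_of (GLscalars F)}) :
  prime p -> odd p -> #|F| = (p ^ 2)%N ->
  D \subset PGL2 F -> D \isog 'D_(2 * p) ->
  exists (K H : {group coset_of (GLscalars F)}),
    [/\ (K ><| H)%g = 'N_(PGL2 F)(D)%g,
        cyclic K /\ #|K| = p, cyclic H /\ #|H| = p.-1
      & 'C_H(K)%g = 1%g].
Proof.
move=> pr oddp cardF _ isoD.
have chp : (p \in [pchar F])%R := card_finPcharP cardF pr.
have cardF' : #|F| = (p * p)%N by rewrite cardF expnS expn1.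
have [x [y [defD ox oy xy]]] := dihedral_gens (prime_gt1 pr) isoD.
set X := repr x; have xX : x = coset (ScG F) X by rewrite cos_repr.
have [lam Xp] : exists lam, GLval (X ^+ p) = (lam%:M)%R.
  by apply/pi1eqP; rewrite cosX -xX -ox expg_order.
have nsc : ~~ is_scalar_mx (GLval X).
  apply/negP => /is_scalar_mxP[c Xc].
  have : x = 1 by rewrite xX; apply/pi1eqP; exists c.
  by move/eqP; rewrite -order_eq1 ox => /eqP p1; move: pr; rewrite p1.
have [P XP] := conj_to_U chp cardF' Xp nsc.
set z := coset (ScG F) P.
have xz : x ^ z = coset (ScG F) (U F) by rewrite -XP cosJ -xX.
have h1 : <[coset (ScG F) (U F)]> * <[y ^ z]> = (D :^ z)%G.
  by rewrite /= -defD conjsMg -!cycleJ xz.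
have h2 : #[coset (ScG F) (U F)] = p by rewrite -xz orderJ.
have h3 : #[y ^ z] = 2 by rewrite orderJ.
have h4 : coset (ScG F) (U F) ^ (y ^ z) = (coset (ScG F) (U F))^-1.
  by rewrite -xz -conjJg xy conjVg.
have [K' [H' [sd [cK oK] [cH oH] CH]]] :=
  core (D := (D :^ z)%G) (t := y ^ z) pr oddp chp h1 h2 h3 h4.
exists (K' :^ z^-1)%G, (H' :^ z^-1)%G; split.
- by rewrite PGL2T setTI /= -sdprodJ sd /= -normJ conjsgK.
- by rewrite cyclicJ cardJg.
- by rewrite cyclicJ cardJg.
- by rewrite /= centJ -conjIg CH conjs1g.
Qed.

End Part5.

Unset Implicit Arguments.
Theorem proposition3p4 (p : nat) (F : finFieldType)
    (D : {group coset_of (GLscalars F)}) :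
  prime p -> odd p -> #|F| = (p ^ 2)%N ->
  D \subset PGL2 F -> D \isog 'D_(2 * p) ->
  exists (K H : {group coset_of (GLscalars F)}),
    [/\ (K ><| H)%g = 'N_(PGL2 F)(D)%g,
        cyclic K /\ #|K| = p, cyclic H /\ #|H| = p.-1
      & 'C_H(K)%g = 1%g].
Proof. exact: Part5.main_aux. Qed.
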